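(* Let $\mathbb{C}[X]^*$ be the linear dual of $\mathbb{C}[X]$ with the convolution product $(f*g)(X^n)=\sum_{k=0}^n\binom{n}{k}f(X^k)g(X^{n-k})$ (unit $\varepsilon$, $\varepsilon(X^n)=\delta_{n,0}$), let $I=\{f\in\mathbb{C}[X]^*\mid f(1)=0\}$, let $\mathbb{C}[X]^{\circ}$ be the subalgebra of those $f\in\mathbb{C}[X]^*$ vanishing on some non-zero ideal of $\mathbb{C}[X]$, and let $J=I\cap\mathbb{C}[X]^{\circ}$. Let $\xi\in\mathbb{C}[X]^*$ be given by $\xi(X^n)=\delta_{n,1}$ and $\phi_1\in\mathbb{C}[X]^*$ by $\phi_1(X^n)=1$ for all $n\geq 0$ (powers $\xi^k$ taken in the convolution product, $\xi^0=\varepsilon$). Then for every $n\geq 1$ the element $$\phi_1-\sum_{k=0}^{n-1}\frac{1}{k!}\xi^k$$ belongs to $I^n\cap\mathbb{C}[X]^{\circ}$ (with $I^n$ computed in $\mathbb{C}[X]^*$) but does not belong to $J^n$ (computed in $\mathbb{C}[X]^\circ$) when $n\geq 2$. In particular $J^2\subsetneq I^2\cap\mathbb{C}[X]^\circ$, and the $J$-adic filtration $(J^n)_n$ on $\mathbb{C}[X]^\circ$ does not coincide with the induced filtration $(I^n\cap\mathbb{C}[X]^\circ)_n$.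
   Context: Via $f\mapsto (f(X^n))_{n\geq0}$, $\mathbb{C}[X]^*$ is identified with the space of complex sequences under the Hurwitz product and $\mathbb{C}[X]^\circ$ with the linearly recursive sequences. Here $\phi_1$ is the algebra map $\mathbb{C}[X]\to\mathbb{C}$ with $X\mapsto 1$. *)

(* Defs.v *)
From HB Require Import structures.
From mathcomp Require Import all_boot all_order all_algebra.
From mathcomp Require Import complex.
From mathcomp Require Import reals.
Set Implicit Arguments. Unset Strict Implicit. Unset Printing Implicit Defensive.
Import Order.TTheory GRing.Theory Num.Theory.
Local Open Scope ring_scope.

Section Hurwitz.
Variable C : fieldType.

(* C[X]^* identified with sequences f : nat -> C, f n = f(X^n). *)
Definition hseq := nat -> C.

Definition hadd (f g : hseq) : hseq := fun n => f n + g n.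
Definition hzero : hseq := fun _ => 0.
Definition hopp (f : hseq) : hseq := fun n => - f n.
Definition hscale (c : C) (f : hseq) : hseq := fun n => c * f n.

Definition hconv (f g : hseq) : hseq :=
  fun n => \sum_(k < n.+1) 'C(n, k)%:R * f k * g (n - k)%N.

Definition heps : hseq := fun n => (n == 0%N)%:R.

Definition hxi : hseq := fun n => (n == 1%N)%:R.
Definition phi1 : hseq := fun _ => 1.

Definition hpow (f : hseq) (k : nat) : hseq := iter k (hconv f) heps.

Definition heval (f : hseq) (p : {poly C}) : C :=
  \sum_(i < size p) p`_i * f i.

Definition Iaug (f : hseq) : Prop := f 0%N = 0.

Definition is_poly_ideal (S : {poly C} -> Prop) : Prop :=
  [/\ S 0, (forall p q, S p -> S q -> S (p + q)) &
      (forall p q, S p -> S (q * p))].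

Definition Cdualo (f : hseq) : Prop :=
  exists S : {poly C} -> Prop,
    [/\ is_poly_ideal S, (exists p, S p /\ p != 0) &
        (forall p, S p -> heval f p = 0)].

Definition Jaug (f : hseq) : Prop := Iaug f /\ Cdualo f.

Definition idpow (Amb A : hseq -> Prop) (n : nat) (f : hseq) : Prop :=
  exists (m : nat) (r : 'I_m -> hseq) (a : 'I_m -> 'I_n -> hseq),
    [/\ (forall i, Amb (r i)), (forall i j, A (a i j)) &
        f = \big[hadd/hzero]_(i < m) hconv (r i) (\big[hconv/heps]_(j < n) a i j)].

Definition allseq (f : hseq) : Prop := True.

Definition tail_elt (n : nat) : hseq :=
  hadd phi1 (hopp (\big[hadd/hzero]_(k < n) hscale (k`!%:R)^-1 (hpow hxi k))).

End Hurwitz.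

(* Main.v *)
Require Import Defs.
From mathcomp Require Import all_boot all_order all_algebra.
From mathcomp Require Import complex reals.
From mathcomp Require Import ring lra zify.
From Stdlib Require Import FunctionalExtensionality.
Import GRing.Theory Num.Theory.
Local Open Scope ring_scope.

Section Gen.
Variable C : numClosedFieldType.
Implicit Types (f h : hseq C) (a b c : C).

Lemma hconv0 f h : hconv f h 0 = f 0%N * h 0%N.
Proof. by rewrite /hconv big_ord1 bin0 mul1r. Qed.

Lemma hconv_lin a b f1 f2 h n :
  hconv (fun m => a * f1 m + b * f2 m) h n = a * hconv f1 h n + b * hconv f2 h n.
Proof.
rewrite /hconv !mulr_sumr -big_split /=; apply: eq_bigr => i _.
by ring.
Qed.

Lemma hconvC f h : hconv f h =1 hconv h f.
Proof.
move=> n; rewrite /hconv (reindex_inj rev_ord_inj) /=; apply: eq_bigr => i _.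
rewrite subKn; last by rewrite -ltnS.
by rewrite bin_sub ?[_ * h _]mulrC ?mulrA // -ltnS.
Qed.

Lemma hconv_linr a b f h1 h2 n :
  hconv f (fun m => a * h1 m + b * h2 m) n = a * hconv f h1 n + b * hconv f h2 n.
Proof. by rewrite hconvC hconv_lin !(hconvC _ f). Qed.

Lemma hconv_ext f1 f2 h1 h2 : f1 =1 f2 -> h1 =1 h2 -> hconv f1 h1 =1 hconv f2 h2.
Proof. by move=> e1 e2 n; apply: eq_bigr => i _; rewrite e1 e2. Qed.

Lemma hconvS f h n :
  hconv f h n.+1 = hconv (fun m => f m.+1) h n + hconv f (fun m => h m.+1) n.
Proof.
rewrite /hconv big_ord_recl /=.
under eq_bigr => i _ do rewrite /bump /= add1n binS natrD !mulrDl subSS.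
rewrite big_split /= [X in _ + X]addrC addrCA; congr (_ + _).
rewrite bin0 [in RHS]big_ord_recl /= bin0; congr (_ + _).
  by rewrite !subn0.
rewrite big_ord_recr /= bin_small // mul0r mul0r addr0.
by apply: eq_bigr => i _; rewrite /bump /= add1n subnSK.
Qed.


Definition g a (k n : nat) : C := k`!%:R * 'C(n, k)%:R * a ^+ (n - k).

Lemma g_0 a k : g a k 0 = (k == 0)%:R.
Proof. by rewrite /g bin0n; case: k => [|k] /=; rewrite ?fact0 !(mulr0, mul0r, mulr1, mul1r). Qed.

Lemma gS a k n : g a k n.+1 = k%:R * g a k.-1 n + a * g a k n.
Proof.
rewrite /g; case: k => [|k] /=.
  by rewrite !bin0 fact0 !mul1r mul0r add0r !subn0 exprS.
rewrite binS natrD factS natrM subSS.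
case: (ltnP k n) => hk.
  have e : a ^+ (n - k) = a * a ^+ (n - k.+1) by rewrite -exprS subnSK.
  rewrite e; ring.
rewrite (bin_small (n:=n) (m:=k.+1)) ?ltnS //; ring.
Qed.

Lemma gmul a b k l n : hconv (g a k) (g b l) n = g (a + b) (k + l) n.
Proof.
elim: n k l => [|n IH] k l.
  by rewrite hconv0 !g_0 addn_eq0; case: (k == 0%N); case: (l == 0%N); rewrite /= ?mulr1 ?mulr0 ?mul0r.
rewrite hconvS.
rewrite (@hconv_ext _ _ _ _ (fun m => gS a k m) (frefl (g b l))).
rewrite (@hconv_ext _ _ _ _ (frefl (g a k)) (fun m => gS b l m)).
rewrite hconv_lin hconv_linr !IH gS.
case: k => [|k]; case: l => [|l] /=; rewrite ?addn0 ?add0n ?addSn ?addnS /=; ring.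
Qed.

Lemma g0E k n : g 0 k n = k`!%:R * (n == k)%:R.
Proof.
rewrite /g; case: (ltngtP n k) => h.
- by rewrite bin_small // mulr0 mul0r.
- by rewrite expr0n subn_eq0 leqNgt h /= !mulr0.
- by rewrite h binn subnn expr0 !mulr1.
Qed.


Lemma hsumE I (r : seq I) (P : pred I) (F : I -> hseq C) n :
  (\big[@hadd C/@hzero C]_(i <- r | P i) F i) n = \sum_(i <- r | P i) F i n.
Proof. by apply: (big_morph (fun f : hseq C => f n) (id1 := 0) (op1 := +%R)). Qed.

Lemma hconv_sum I (r : seq I) (F : I -> hseq C) h n :
  hconv (fun m => \sum_(x <- r) F x m) h n = \sum_(x <- r) hconv (F x) h n.
Proof.
elim: r => [|x r IH] /=.
  by rewrite big_nil /hconv big1 // => i _; rewrite big_nil mulr0 mul0r.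
rewrite big_cons -IH.
have := hconv_lin 1 1 (F x) (fun m => \sum_(x <- r) F x m) h n.
rewrite !mul1r => <-; apply: hconv_ext => // m; by rewrite big_cons !mul1r.
Qed.

Lemma hconv_sumr I (r : seq I) (F : I -> hseq C) h n :
  hconv h (fun m => \sum_(x <- r) F x m) n = \sum_(x <- r) hconv h (F x) n.
Proof. by rewrite hconvC hconv_sum; apply: eq_bigr => x _; rewrite hconvC. Qed.

Lemma hconv_scale c f h n : hconv (fun m => c * f m) h n = c * hconv f h n.
Proof.
have := hconv_lin c 0 f f h n; rewrite mul0r addr0 => <-.
by apply: hconv_ext => // m; rewrite mul0r addr0.
Qed.

Lemma hconv_scaler c f h n : hconv h (fun m => c * f m) n = c * hconv h f n.
Proof. by rewrite hconvC hconv_scale hconvC. Qed.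

Definition trip := (C * nat * C)%type.
Definition comb (s : seq trip) : hseq C := fun n => \sum_(x <- s) x.2 * g x.1.1 x.1.2 n.
Definition Lc (s : seq trip) : C := \sum_(x <- s) (x.1.2 == 1%N)%:R * x.2.
Definition ev0 (s : seq trip) : C := \sum_(x <- s) (x.1.2 == 0%N)%:R * x.2.
Definition tmul (s1 s2 : seq trip) : seq trip :=
  [seq (x.1.1 + y.1.1, (x.1.2 + y.1.2)%N, x.2 * y.2) | x <- s1, y <- s2].
Definition tscale c (s : seq trip) : seq trip := [seq (x.1, c * x.2) | x <- s].

Lemma comb_0 s : comb s 0 = ev0 s.
Proof. by apply: eq_bigr => x _; rewrite g_0 mulrC. Qed.

Lemma comb_cat s1 s2 n : comb (s1 ++ s2) n = comb s1 n + comb s2 n.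
Proof. by rewrite /comb big_cat. Qed.
Lemma Lc_cat s1 s2 : Lc (s1 ++ s2) = Lc s1 + Lc s2.
Proof. by rewrite /Lc big_cat. Qed.
Lemma ev0_cat s1 s2 : ev0 (s1 ++ s2) = ev0 s1 + ev0 s2.
Proof. by rewrite /ev0 big_cat. Qed.

Lemma comb_scale c s n : comb (tscale c s) n = c * comb s n.
Proof. by rewrite /comb big_map mulr_sumr; apply: eq_bigr => x _; rewrite mulrA. Qed.
Lemma Lc_scale c s : Lc (tscale c s) = c * Lc s.
Proof. by rewrite /Lc big_map mulr_sumr; apply: eq_bigr => x _ /=; ring. Qed.
Lemma ev0_scale c s : ev0 (tscale c s) = c * ev0 s.
Proof. by rewrite /ev0 big_map mulr_sumr; apply: eq_bigr => x _ /=; ring. Qed.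

Lemma comb_mul s1 s2 n : hconv (comb s1) (comb s2) n = comb (tmul s1 s2) n.
Proof.
rewrite /comb /tmul big_allpairs_dep hconv_sum; apply: eq_bigr => x _.
rewrite hconv_scale hconv_sumr mulr_sumr; apply: eq_bigr => y _ /=.
by rewrite hconv_scaler gmul; ring.
Qed.

Lemma ev0_mul s1 s2 : ev0 (tmul s1 s2) = ev0 s1 * ev0 s2.
Proof.
rewrite /ev0 /tmul big_allpairs_dep mulr_suml; apply: eq_bigr => x _.
rewrite mulr_sumr; apply: eq_bigr => y _ /=; rewrite addn_eq0.
by case: (x.1.2 == 0%N); case: (y.1.2 == 0%N) => /=; ring.
Qed.

Lemma Lc_mul s1 s2 : Lc (tmul s1 s2) = Lc s1 * ev0 s2 + ev0 s1 * Lc s2.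
Proof.
rewrite /ev0 /Lc /tmul big_allpairs_dep !mulr_suml -big_split; apply: eq_bigr => x _.
rewrite !mulr_sumr -big_split; apply: eq_bigr => y _ /=.
by case: x => [[a [|[|k]]] c]; case: y => [[b [|[|l]]] d] /=; rewrite ?addnS ?addSn /=; ring.
Qed.


Definition combF (ls : seq C) (K : nat) (c : C -> nat -> C) (n : nat) : C :=
  \sum_(l <- ls) \sum_(k < K) c l k * g l k n.

Definition opc (l1 : C) (c : C -> nat -> C) : C -> nat -> C :=
  fun l k => (l - l1) * c l k + k.+1%:R * c l k.+1.

Definition suppK (K : nat) (c : C -> nat -> C) := forall l k, (K <= k)%N -> c l k = 0.

Lemma suppK_opc K l1 (c : C -> nat -> C) : suppK K c -> suppK K (opc l1 c).
Proof. by move=> h l k hk; rewrite /opc !h ?mulr0 ?addr0 // (leq_trans hk). Qed.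

Lemma suppK_iter K l1 (c : C -> nat -> C) j : suppK K c -> suppK K (iter j (opc l1) c).
Proof. by move=> h; elim: j => //= j IH; apply: suppK_opc. Qed.

Lemma sumK_op K (d : nat -> C) l l1 n : (forall k, (K <= k)%N -> d k = 0) ->
  \sum_(k < K) d k * g l k n.+1 - l1 * \sum_(k < K) d k * g l k n =
  \sum_(k < K) ((l - l1) * d k + k.+1%:R * d k.+1) * g l k n.
Proof.
move=> hd; rewrite mulr_sumr -sumrB.
transitivity (\sum_(k < K) ((l - l1) * d k * g l k n) + \sum_(k < K) d k * (k%:R * g l k.-1 n)).
  by rewrite -big_split; apply: eq_bigr => k _ /=; rewrite gS; ring.
rewrite [RHS](eq_bigr (fun k : 'I_K => (l - l1) * d k * g l k n + k.+1%:R * d k.+1 * g l k n)); last first.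
  by move=> k _; ring.
rewrite big_split /=; congr (_ + _).
case: K hd => [|K] hd; first by rewrite !big_ord0.
rewrite big_ord_recl /= mul0r mulr0 add0r big_ord_recr /= (hd K.+1) // mulr0 mul0r addr0.
by apply: eq_bigr => i _; rewrite /bump /= add1n /=; ring.
Qed.

Lemma combF_op ls K (c : C -> nat -> C) l1 n : suppK K c ->
  combF ls K c n.+1 - l1 * combF ls K c n = combF ls K (opc l1 c) n.
Proof.
move=> hs; rewrite /combF mulr_sumr -sumrB; apply: eq_bigr => l _.
by rewrite sumK_op // => k hk; apply: hs.
Qed.

Lemma combF_iter ls K (c : C -> nat -> C) l1 j : suppK K c -> (forall n, combF ls K c n = 0) ->
  forall n, combF ls K (iter j (opc l1) c) n = 0.
Proof.
move=> hs h0; elim: j => //= j IH n.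
by rewrite -combF_op ?IH ?mulr0 ?subr0 //; apply: suppK_iter.
Qed.

Lemma iter_head K l1 (c : C -> nat -> C) j k : suppK K c -> (K <= k + j)%N -> iter j (opc l1) c l1 k = 0.
Proof.
move=> hs; elim: j k => [|j IH] k hk /=; first by rewrite addn0 in hk; apply: hs.
by rewrite /opc subrr mul0r add0r IH ?mulr0 // addSn -addnS.
Qed.

Lemma iter_head0 l1 (c : C -> nat -> C) j : (iter j (opc l1) c l1 0%N) = j`!%:R * c l1 j.
Proof.
suff: forall k, iter j (opc l1) c l1 k * k`!%:R = (k + j)`!%:R * c l1 (k + j)%N.
  by move=> /(_ 0%N); rewrite fact0 mulr1 add0n.
elim: j => [|j IH] k /=.
  by rewrite addn0 mulrC.
rewrite /opc subrr mul0r add0r -addSnnS -IH factS natrM; ring.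
Qed.

Lemma single_indep K l1 (c : C -> nat -> C) : suppK K c -> (forall n, \sum_(k < K) c l1 k * g l1 k n = 0) ->
  forall k, c l1 k = 0.
Proof.
move=> hs h0 j.
have h1 : forall n, combF [:: l1] K (iter j (opc l1) c) n = 0.
  by apply: combF_iter => // n; rewrite /combF big_cons big_nil addr0.
move: (h1 0%N); rewrite /combF big_cons big_nil addr0.
case: K hs {h0 h1} => [|K] hs.
  by rewrite big_ord0 => _; apply: hs.
rewrite big_ord_recl /= g_0 mulr1 big1 ?addr0; last by move=> i _; rewrite g_0 /= mulr0.
rewrite iter_head0 => /eqP; rewrite mulf_eq0 pnatr_eq0 => /orP [|/eqP //].
by rewrite -[_ == _]negbK -lt0n fact_gt0.
Qed.

Lemma back_step K l1 l (c : C -> nat -> C) : l != l1 -> suppK K c -> (forall k, opc l1 c l k = 0) -> forall k, c l k = 0.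
Proof.
move=> hl hs h.
suff: forall d k, (K <= k + d)%N -> c l k = 0 by move=> H k; apply: (H K); rewrite leq_addl.
elim=> [|d IH] k hk; first by rewrite addn0 in hk; apply: hs.
move: (h k); rewrite /opc (IH k.+1) ?mulr0 ?addr0; last by rewrite addSn -addnS.
by move/eqP; rewrite mulf_eq0 subr_eq0 (negbTE hl) /= => /eqP.
Qed.

Lemma back_iter K l1 l j (c : C -> nat -> C) : l != l1 -> suppK K c -> (forall k, iter j (opc l1) c l k = 0) ->
  forall k, c l k = 0.
Proof.
move=> hl; elim: j c => [|j IH] c hs //= h.
have h2 : forall k, opc l1 c l k = 0.
  apply: IH; first by apply: suppK_opc.
  by move=> k; rewrite -iterSr; apply: h.
by apply: back_step hl hs h2.
Qed.

Lemma indepF ls : uniq ls -> forall K (c : C -> nat -> C), suppK K c -> (forall n, combF ls K c n = 0) ->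
  forall l, l \in ls -> forall k, c l k = 0.
Proof.
elim: ls => [|l1 ls IH] //= /andP [hn hu] K c hs h0.
have hK : forall k, iter K (opc l1) c l1 k = 0 by move=> k; apply: (@iter_head K l1 c K k hs); rewrite leq_addl.
have htail : forall l, l \in ls -> forall k, c l k = 0.
  move=> l hl; have hne : l != l1 by apply: contraNneq hn => <-.
  apply: (@back_iter K l1 l K c hne hs).
  apply: (IH hu K (iter K (opc l1) c)) => //; first by apply: suppK_iter.
  move=> n; move: (@combF_iter _ K c l1 K hs h0 n); rewrite /combF big_cons.
  by rewrite big1 ?add0r // => i _; rewrite hK mul0r.
have hhead : forall k, c l1 k = 0.
  apply: (@single_indep K l1 c hs) => n; move: (h0 n); rewrite /combF big_cons.
  rewrite [X in _ + X]big1_seq ?addr0 // => l2 /andP [_ hl2].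
  by apply: big1 => i _; rewrite htail ?mul0r.
by move=> l; rewrite inE => /orP [/eqP -> //| hl]; apply: htail.
Qed.


Section Regroup.
Variable s : seq trip.
Let ls := undup [seq x.1.1 | x <- s].
Let K := (\max_(x <- s) x.1.2).+2.
Let cf : C -> nat -> C := fun l k => \sum_(x <- s | (x.1.1 == l) && (x.1.2 == k)) x.2.

Lemma regroup (F : trip -> C) : \sum_(x <- s) F x =
  \sum_(l <- ls) \sum_(k < K) \sum_(x <- s | (x.1.1 == l) && (x.1.2 == k)) F x.
Proof.
under [RHS]eq_bigr => l _ do under eq_bigr => k _ do rewrite big_mkcond.
under [RHS]eq_bigr => l _ do rewrite exchange_big.
rewrite exchange_big; apply: eq_big_seq => x xs /=.
have hk : (x.1.2 < K)%N by rewrite /K ltnS (leq_trans (@leq_bigmax_seq _ s predT (fun y : trip => y.1.2) x xs isT)) ?leqnSn.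
have e : forall l, \sum_(k < K) (if (x.1.1 == l) && (x.1.2 == k) then F x else 0) =
   if x.1.1 == l then F x else 0.
  move=> l; rewrite (bigD1 (Ordinal hk)) //= eqxx andbT big1 ?addr0 // => k hk'.
  by rewrite -val_eqE /= eq_sym in hk'; rewrite (negbTE hk') andbF.
under eq_bigr => l _ do rewrite e.
have hl : x.1.1 \in ls by rewrite mem_undup; apply: map_f.
rewrite (bigD1_seq _ hl (undup_uniq _)) /= eqxx big1 ?addr0 // => l hl'.
by rewrite eq_sym (negbTE hl').
Qed.

Lemma comb_combF n : comb s n = combF ls K cf n.
Proof.
rewrite /comb regroup /combF; apply: eq_bigr => l _; apply: eq_bigr => k _.
rewrite mulr_suml; apply: eq_bigr => x /andP [/eqP -> /eqP ->] //.
Qed.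

Lemma Lc_combF : Lc s = \sum_(l <- ls) cf l 1%N.
Proof.
rewrite /Lc regroup; apply: eq_bigr => l _.
have h1 : (1 < K)%N by [].
rewrite (bigD1 (Ordinal h1)) //= [X in _ + X]big1 ?addr0.
  by apply: eq_bigr => x /andP [_ /eqP ->]; rewrite mul1r.
move=> k hk'; rewrite -val_eqE /= in hk'.
by apply: big1 => x /andP [_ /eqP e]; rewrite e (negbTE hk') mul0r.
Qed.

Lemma supp_cf : suppK K cf.
Proof.
move=> l k hk; apply: big1_seq => x /andP [/andP [_ /eqP e] xs].
have : (x.1.2 < K)%N by rewrite /K ltnS (leq_trans (@leq_bigmax_seq _ s predT (fun y : trip => y.1.2) x xs isT)) ?leqnSn.
by rewrite e ltnNge hk.
Qed.

Lemma indep : (forall n, comb s n = 0) -> Lc s = 0.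
Proof.
move=> h; rewrite Lc_combF big1_seq // => l /andP [_ hl].
apply: (@indepF ls (undup_uniq _) K cf supp_cf) => // n.
by rewrite -comb_combF.
Qed.
End Regroup.

Definition Sh (l : C) (f : hseq C) : hseq C := fun n => f n.+1 - l * f n.

Lemma hevalE f (p : {poly C}) N : (size p <= N)%N -> heval f p = \sum_(i < N) p`_i * f i.
Proof.
move=> hN; rewrite /heval (big_ord_widen N (fun i => p`_i * f i) hN) big_mkcond /=.
by apply: eq_bigr => i _; case: ifP => // /negbT; rewrite -leqNgt => h; rewrite nth_default ?mul0r.
Qed.

Lemma heval_lin f a b (p q : {poly C}) : heval f (a *: p + b *: q) = a * heval f p + b * heval f q.
Proof.
set N := maxn (size p) (size q).
have hp : (size p <= N)%N by rewrite leq_max leqnn.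
have hq : (size q <= N)%N by rewrite leq_max leqnn orbT.
have hpq : (size (a *: p + b *: q)%R <= N)%N.
  apply: (leq_trans (@size_polyD _ (a *: p) (b *: q))); rewrite geq_max.
  by rewrite (leq_trans (size_scale_leq _ _)) // (leq_trans (size_scale_leq _ _)).
rewrite (@hevalE f _ _ hpq) (@hevalE f _ _ hp) (@hevalE f _ _ hq) !mulr_sumr -big_split /=.
by apply: eq_bigr => i _; rewrite coefD !coefZ; ring.
Qed.

Lemma heval_flin a b f1 f2 (p : {poly C}) :
  heval (fun n => a * f1 n + b * f2 n) p = a * heval f1 p + b * heval f2 p.
Proof. by rewrite /heval !mulr_sumr -big_split; apply: eq_bigr => i _ /=; ring. Qed.

Lemma heval_ext f1 f2 (p : {poly C}) : f1 =1 f2 -> heval f1 p = heval f2 p.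
Proof. by move=> e; apply: eq_bigr => i _; rewrite e. Qed.

Lemma heval_fsum I (r : seq I) (F : I -> hseq C) (p : {poly C}) :
  heval (fun n => \sum_(x <- r) F x n) p = \sum_(x <- r) heval (F x) p.
Proof.
rewrite /heval exchange_big /=; apply: eq_bigr => i _; by rewrite mulr_sumr.
Qed.

Lemma heval_mulX f (q : {poly C}) : heval f (q * 'X) = heval (fun n => f n.+1) q.
Proof.
have h : (size (q * 'X)%R <= (size q).+1)%N.
  by rewrite (leq_trans (size_polyMleq _ _)) // size_polyX addn2.
rewrite (@hevalE f _ _ h) big_ord_recl coefMX /= mul0r add0r (@hevalE _ _ _ (leqnn _)).
by apply: eq_bigr => i _; rewrite coefMX.
Qed.

Lemma heval_XsubC f (q : {poly C}) l : heval f (q * ('X - l%:P)) = heval (Sh l f) q.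
Proof.
rewrite mulrBr [q * l%:P]mulrC mul_polyC.
have := heval_lin f 1 (- l) (q * 'X) q; rewrite !scale1r scaleNr => ->.
rewrite heval_mulX.
have := heval_flin 1 (- l) (fun n => f n.+1) f q; rewrite !mul1r => <-.
by apply: heval_ext => n; rewrite /Sh mulNr mul1r.
Qed.

Lemma heval_Xn f m : heval f 'X^m = f m.
Proof.
rewrite /heval size_polyXn big_ord_recr /= coefXn eqxx mul1r big1 ?add0r // => i _.
by rewrite coefXn (ltn_eqF (ltn_ord i)) mul0r.
Qed.

Definition ann f (P : {poly C}) := forall q, heval f (q * P) = 0.

Lemma Cdualo_ann f : Cdualo f <-> exists2 P, P != 0 & ann f P.
Proof.
split.
  case=> S [[S0 SD SM] [p [Sp pn0]] hS]; exists p => // q.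
  by apply: hS; apply: SM.
case=> P Pn0 hP; exists (fun p => exists q, p = q * P); split.
- split; first by exists 0; rewrite mul0r.
  + by move=> p1 p2 [q1 ->] [q2 ->]; exists (q1 + q2); rewrite mulrDl.
  + by move=> p1 p2 [q1 ->]; exists (p2 * q1); rewrite mulrA.
- by exists P; split=> //; exists 1; rewrite mul1r.
- by move=> p [q ->]; apply: hP.
Qed.

Lemma ann_g l k q : heval (g l k) (q * ('X - l%:P) ^+ k.+1) = 0.
Proof.
elim: k q => [|k IH] q.
  rewrite expr1 heval_XsubC (@heval_ext _ (fun _ => 0)) /heval ?big1 // => [i _|n].
    by rewrite mulr0.
  by rewrite /Sh gS /= mul0r add0r subrr.
rewrite exprSr mulrA heval_XsubC.
rewrite (@heval_ext _ (fun n => k.+1%:R * g l k n + 0 * g l k n)); last first.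
  by move=> n; rewrite /Sh gS /=; ring.
by rewrite heval_flin IH; ring.
Qed.

Lemma Cdualo_comb s : Cdualo (comb s).
Proof.
apply/Cdualo_ann; exists (\prod_(x <- s) ('X - x.1.1%:P) ^+ x.1.2.+1).
  rewrite prodf_seq_neq0; apply/allP => x _ /=.
  by rewrite expf_neq0 // -size_poly_eq0 size_XsubC.
move=> q; rewrite /comb heval_fsum; apply: big1_seq => x /andP [_ xs].
rewrite (big_rem x xs) /= [_ ^+ _ * _]mulrC mulrA.
have := heval_flin x.2 0 (g x.1.1 x.1.2) (g x.1.1 x.1.2)
  ((q * \prod_(y <- rem x s) ('X - y.1.1%:P) ^+ y.1.2.+1) * ('X - x.1.1%:P) ^+ x.1.2.+1).
rewrite ann_g mulr0 mul0r addr0 => <-.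
by apply: heval_ext => n; rewrite mul0r addr0.
Qed.

Lemma comb_cons x s n : comb (x :: s) n = x.2 * g x.1.1 x.1.2 n + comb s n.
Proof. by rewrite /comb big_cons. Qed.

Lemma comb_nil n : comb [::] n = 0.
Proof. by rewrite /comb big_nil. Qed.

Lemma sh_single l mu k : exists t, forall n, Sh l (comb t) n = g mu k n.
Proof.
have [->|hne] := eqVneq mu l.
  exists [:: (l, k.+1, k.+1%:R^-1)] => n.
  rewrite /Sh !comb_cons !comb_nil !addr0 /= gS /=.
  have hk : k.+1%:R != 0 :> C by rewrite pnatr_eq0.
  by rewrite mulrDr mulrA mulVf // mul1r; ring.
have hd : mu - l != 0 by rewrite subr_eq0.
elim: k => [|k [t IH]].
  exists [:: (mu, 0%N, (mu - l)^-1)] => n.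
  rewrite /Sh !comb_cons !comb_nil !addr0 /= gS /= mul0r add0r.
  by field.
exists ((mu, k.+1, (mu - l)^-1) :: tscale (- k.+1%:R / (mu - l)) t) => n.
rewrite /Sh !comb_cons /= !comb_scale.
have e2 : comb t n.+1 = g mu k n + l * comb t n by rewrite -(IH n) /Sh; ring.
rewrite e2 gS /=.
rewrite -mulNrn; set d := (mu - l).
rewrite [in RHS](_ : g mu k.+1 n = d^-1 * (d * g mu k.+1 n)); last by rewrite mulrA mulVf // mul1r.
rewrite /d; ring.
Qed.

Lemma sh_surj l s1 : exists s2, forall n, Sh l (comb s2) n = comb s1 n.
Proof.
elim: s1 => [|x s1 [s2 IH]].
  by exists [::] => n; rewrite /Sh !comb_nil mulr0 subr0.
have [t ht] := sh_single l x.1.1 x.1.2.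
exists (tscale x.2 t ++ s2) => n.
have := IH n; have := ht n; rewrite /Sh !comb_cat !comb_scale comb_cons => <- <-.
ring.
Qed.

Lemma exist_rep N : forall (P : {poly C}) f, (size P <= N)%N -> P != 0 -> ann f P ->
  exists s, forall n, f n = comb s n.
Proof.
elim: N => [|N IH] P f hN hP hann.
  by move: hP; rewrite -size_poly_eq0 -leqn0 hN.
case: (boolP (size P == 1%N)) => [/size_poly1P [c hc hPc]|hs1].
  exists [::] => m; rewrite comb_nil; move: hann; rewrite hPc => hann.
  have := hann (c^-1 *: 'X^m); rewrite -scalerAl mulrC mul_polyC scalerA mulVf // scale1r.
  by rewrite heval_Xn.
have /closed_rootP [l hl] := hs1.
have /factor_theorem [Q hQ] := hl.
have hQ0 : Q != 0 by apply: contra_neq hP; rewrite hQ => ->; rewrite mul0r.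
have hsz : (size Q <= N)%N.
  move: hN; rewrite hQ size_mul // ?size_XsubC ?addn2 //.
  by rewrite -size_poly_eq0 size_XsubC.
have hann' : ann (Sh l f) Q.
  by move=> q; rewrite -heval_XsubC -mulrA -hQ; apply: hann.
have [s1 hs] := IH Q (Sh l f) hsz hQ0 hann'.
have [s2 hs2] := sh_surj l s1.
pose h := fun n => f n - comb s2 n.
have hh : forall n, h n.+1 = l * h n.
  move=> n; have := hs n; have := hs2 n; rewrite /h /Sh => <-.
  by move/eqP; rewrite subr_eq => /eqP ->; ring.
have hh2 : forall n, h n = h 0%N * l ^+ n.
  by elim=> [|n IHn]; rewrite ?expr0 ?mulr1 // hh IHn exprS; ring.
exists (s2 ++ [:: (l, 0%N, h 0%N)]) => n.
rewrite comb_cat comb_cons comb_nil addr0 /= /g fact0 bin0 subn0 !mul1r -hh2 /h.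
ring.
Qed.

Lemma Cdualo_rep f : Cdualo f -> exists s, forall n, f n = comb s n.
Proof. by case/Cdualo_ann => P hP hann; apply: (@exist_rep _ P f (leqnn _) hP hann). Qed.

Lemma app_eq (f1 f2 : hseq C) x : f1 = f2 -> f1 x = f2 x.
Proof. by move=> ->. Qed.

Lemma hprod_rep n' (a' : 'I_n' -> hseq C) : (forall j, Jaug (a' j)) ->
  exists p, (forall x, (\big[@hconv C/@heps C]_(j < n') a' j) x = comb p x) /\
    ((0 < n')%N -> ev0 p = 0) /\ ((1 < n')%N -> Lc p = 0).
Proof.
elim: n' a' => [|n' IH] a' ha.
  exists [:: (0, 0%N, 1)]; split; last by [].
  by move=> x; rewrite big_ord0 comb_cons comb_nil addr0 /= g0E fact0 !mul1r.
have [p [hp [hp0 hp1]]] := IH (fun j => a' (lift ord0 j)) (fun j => ha _).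
have [[ha0 hac]] := ha ord0.
have [s hs] := @Cdualo_rep _ hac.
have hs0 : ev0 s = 0 by rewrite -comb_0 -hs.
exists (tmul s p); split.
  move=> x; rewrite big_ord_recl -comb_mul.
  by apply: hconv_ext.
split; first by rewrite ev0_mul hs0 mul0r.
by move=> hn; rewrite Lc_mul hs0 (hp0 hn) mulr0 mul0r addr0.
Qed.

Lemma hsum_rep m' (F : 'I_m' -> hseq C) (P : Prop) :
  (forall i, exists s, (forall x, F i x = comb s x) /\ (P -> Lc s = 0)) ->
  exists q, (forall x, (\big[@hadd C/@hzero C]_(i < m') F i) x = comb q x) /\ (P -> Lc q = 0).
Proof.
elim: m' F => [|m' IH] F hF.
  by exists [::]; split; [move=> x; rewrite big_ord0 comb_nil | rewrite /Lc big_nil].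
have [q [hq hq0]] := IH (fun i => F (lift ord0 i)) (fun i => hF _).
have [s [hs hs0]] := hF ord0.
exists (s ++ q); split.
  by move=> x; rewrite big_ord_recl /hadd comb_cat hq hs.
by move=> hP; rewrite Lc_cat hq0 // hs0 // addr0.
Qed.

Lemma idpow_rep n f : idpow (@Cdualo C) (@Jaug C) n f ->
  exists q, (forall x, f x = comb q x) /\ ((1 < n)%N -> Lc q = 0).
Proof.
case=> m [r [a [hr ha ->]]].
apply: hsum_rep => i.
have [p [hp [hp0 hp1]]] := @hprod_rep _ _ (ha i).
have [sr hsr] := @Cdualo_rep _ (hr i).
exists (tmul sr p); split.
  by move=> x; rewrite -comb_mul; apply: hconv_ext.
by move=> hn; rewrite Lc_mul (hp1 hn) (hp0 (ltnW hn)) !mulr0 addr0.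
Qed.

Definition trep n : seq trip := (1, 0%N, 1) :: tscale (-1) [seq (0, k, (k`!%:R)^-1) | k <- iota 0 n].

Lemma hpow_g k x : hpow (@hxi C) k x = g 0 k x.
Proof.
elim: k x => [|k IH] x /=.
  by rewrite g0E fact0 mul1r.
rewrite (@hconv_ext _ (g 0 1) _ (g 0 k)) ?gmul ?addr0 // => y.
by rewrite /hxi g0E mul1r.
Qed.

Lemma tail_rep n x : tail_elt C n x = comb (trep n) x.
Proof.
rewrite /tail_elt /hadd /hopp /phi1 hsumE comb_cons comb_scale /= /g fact0 bin0 expr1n !mul1r mulN1r.
congr (_ - _); rewrite /comb big_map (_ : iota 0 n = index_iota 0 n) ?big_mkord; last by rewrite /index_iota subn0.
by apply: eq_bigr => k _; rewrite /hscale hpow_g.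
Qed.

Lemma Lc_trep n : (1 < n)%N -> Lc (trep n) = -1.
Proof.
move=> hn; rewrite /trep /Lc big_cons /= mul0r add0r.
have := Lc_scale (-1) [seq (0, k, (k`!%:R)^-1) | k <- iota 0 n]; rewrite /Lc => ->.
rewrite big_map.
rewrite (big_nth 0%N) size_iota big_mkord (bigD1 (Ordinal hn)) //= nth_iota // add0n eqxx mul1r.
rewrite big1 ?addr0; first by rewrite invr1 mulr1.
move=> i hi; rewrite nth_iota // add0n; rewrite -val_eqE /= in hi.
by rewrite (negbTE hi) mul0r.
Qed.

Lemma not_Jn n : (1 < n)%N -> ~ idpow (@Cdualo C) (@Jaug C) n (tail_elt C n).
Proof.
move=> hn /idpow_rep [q [hq hq0]].
have h0 : forall x, comb (q ++ tscale (-1) (trep n)) x = 0.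
  by move=> x; rewrite comb_cat comb_scale -tail_rep -hq; ring.
have := @indep _ h0; rewrite Lc_cat Lc_scale Lc_trep // hq0 // add0r mulrNN mulr1.
by move/eqP; rewrite oner_eq0.
Qed.

Lemma tail_val n x : tail_elt C n x = (n <= x)%N%:R.
Proof.
rewrite /tail_elt /hadd /hopp /phi1 hsumE.
under eq_bigr => k _ do rewrite /hscale hpow_g g0E mulrA mulVf ?mul1r ?pnatr_eq0 -?lt0n ?fact_gt0 //.
case: (ltnP x n) => hx.
  rewrite (bigD1 (Ordinal hx)) //= eqxx big1 ?addr0 ?subrr //.
  by move=> i hi; rewrite -val_eqE /= eq_sym in hi; rewrite (negbTE hi).
rewrite big1 ?subr0 // => i _.
by rewrite (gtn_eqF (leq_trans (ltn_ord i) hx)).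
Qed.

Lemma hprod_xi n x : (\big[@hconv C/@heps C]_(j < n) hxi C) x = g 0 n x.
Proof.
elim: n x => [|n IH] x.
  by rewrite big_ord0 g0E fact0 mul1r.
rewrite big_ord_recl (@hconv_ext _ (g 0 1) _ (g 0 n)) ?gmul ?addr0 // => y.
by rewrite /hxi g0E mul1r.
Qed.

Definition rr (n : nat) : hseq C := fun x => x`!%:R / (x + n)`!%:R.

Lemma conv_rr n x : hconv (rr n) (g 0 n) x = (n <= x)%N%:R.
Proof.
rewrite /hconv.
under eq_bigr => j _ do rewrite g0E.
case: (ltnP x n) => hx.
  rewrite big1 // => j _.
  have : (x - j != n)%N by rewrite neq_ltn (leq_ltn_trans (leq_subr _ _) hx).
  by move/negbTE => ->; rewrite !mulr0.
have hj : (x - n < x.+1)%N by rewrite ltnS leq_subr.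
rewrite (bigD1 (Ordinal hj)) //= subKn // eqxx mulr1 big1 ?addr0.
  rewrite /rr subnK // bin_sub //.
  have hf : x`!%:R != 0 :> C by rewrite pnatr_eq0 -lt0n fact_gt0.
  have := bin_fact hx => /(congr1 (fun m => m%:R : C)); rewrite !natrM => e.
  transitivity ('C(x, n)%:R * (n`!%:R * (x - n)`!%:R) / x`!%:R : C); first by ring.
  by rewrite e mulfV.
move=> j hjn; rewrite -val_eqE /= in hjn.
have : (x - j != n)%N.
  apply: contra hjn => /eqP <-; rewrite subKn // -ltnS; exact: ltn_ord.
by move/negbTE => ->; rewrite !mulr0.
Qed.

Lemma tail_In n : idpow (@allseq C) (@Iaug C) n (tail_elt C n).
Proof.
exists 1%N, (fun _ => rr n), (fun _ _ => hxi C); split => //.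
apply: functional_extensionality => x.
rewrite hsumE big_ord1 (@hconv_ext _ (rr n) _ (g 0 n)) // ?conv_rr ?tail_val //.
exact: hprod_xi.
Qed.

Lemma main_gen :
  (forall n : nat, (1 <= n)%N ->
     (idpow (@allseq C) (@Iaug C) n (tail_elt C n) /\ Cdualo (tail_elt C n))
     /\ ((2 <= n)%N -> ~ idpow (@Cdualo C) (@Jaug C) n (tail_elt C n)))
  /\ (forall f : hseq C,
        idpow (@Cdualo C) (@Jaug C) 2 f -> idpow (@allseq C) (@Iaug C) 2 f /\ Cdualo f)
  /\ (exists f : hseq C,
        (idpow (@allseq C) (@Iaug C) 2 f /\ Cdualo f) /\ ~ idpow (@Cdualo C) (@Jaug C) 2 f).
Proof.
have hcd : forall n, Cdualo (tail_elt C n).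
  move=> n; rewrite (_ : tail_elt C n = comb (trep n)); first exact: Cdualo_comb.
  by apply: functional_extensionality => x; apply: tail_rep.
split; first by move=> n _; split; [split; [exact: tail_In | exact: hcd] | exact: not_Jn].
split.
  move=> f hf; split.
    case: hf => m [r [a [_ ha ->]]]; exists m, r, a; split => // i j.
    by case: (ha i j).
  have [q [hq _]] := @idpow_rep _ _ hf.
  rewrite (_ : f = comb q); first exact: Cdualo_comb.
  by apply: functional_extensionality.
exists (tail_elt C 2); split; first by split; [exact: tail_In | exact: hcd].
exact: not_Jn.
Qed.

End Gen.

Theorem mainTheorem3 (R : realType) :
  (forall n : nat, (1 <= n)%N ->
     (idpow (@allseq R[i]) (@Iaug R[i]) n (@tail_elt R[i] n) /\ Cdualo (@tail_elt R[i] n))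
     /\ ((2 <= n)%N -> ~ idpow (@Cdualo R[i]) (@Jaug R[i]) n (@tail_elt R[i] n)))
  /\ (forall f : hseq R[i],
        idpow (@Cdualo R[i]) (@Jaug R[i]) 2 f -> idpow (@allseq R[i]) (@Iaug R[i]) 2 f /\ Cdualo f)
  /\ (exists f : hseq R[i],
        (idpow (@allseq R[i]) (@Iaug R[i]) 2 f /\ Cdualo f) /\ ~ idpow (@Cdualo R[i]) (@Jaug R[i]) 2 f).
Proof. exact: (main_gen (R[i] : numClosedFieldType)). Qed.
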